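(* Let $C_k=\frac{1}{k+1}\binom{2k}{k}$ and let $S_n=\sum_{k=0}^n\binom{n+k}{2k}C_k$ (the large Schroeder numbers), and let $s_n$ be the little Schroeder numbers, defined by $\sum_{n\ge0}s_nx^n=\frac{1+x-\sqrt{1-6x+x^2}}{4x}$. Then $(S_n)_{n\ge0}$ is the moment sequence of the family of orthogonal polynomials whose coefficient array is the Riordan array $\left(\frac{1}{1+2x},\frac{x}{1+3x+2x^2}\right)$, and $(s_n)_{n\ge0}$ is the moment sequence of the family of orthogonal polynomials whose coefficient array is the Riordan array $\left(\frac{1}{1+x},\frac{x}{1+3x+2x^2}\right)$.
   Context: For power series $g(x)=g_0+g_1x+\cdots$ with $g_0\neq0$ and $f(x)=f_1x+f_2x^2+\cdots$, the Riordan array $(g,f)$ is the infinite lower-triangular matrix $T$ with entries $T_{n,k}=[x^n]\,g(x)f(x)^k$, where $[x^n]$ extracts the coefficient of $x^n$. A Riordan array $T$ is the coefficient array of the family of polynomials $P_n(x)=\sum_{k=0}^nT_{n,k}x^k$ ($n\ge0$). Saying that a sequence $(\mu_n)$ is the moment sequence of this (monic) family of orthogonal polynomials means: the linear functional $L$ on polynomials with $L(x^n)=\mu_n$ satisfies $L(P_mP_n)=0$ for $m\neq n$ and $L(P_n^2)\neq0$; equivalently, $(\mu_n)$ is the first column of the inverse matrix $T^{-1}$. *)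

(* Defs.v *)
From mathcomp Require Import all_boot all_order all_algebra.
Set Implicit Arguments. Unset Strict Implicit. Unset Printing Implicit Defensive.
Import Order.TTheory GRing.Theory Num.Theory.
Local Open Scope ring_scope.

Definition fps := nat -> rat.

Definition fps_of_seq (s : seq rat) : fps := fun n => s`_n.

Definition fX : fps := fun n => if n == 1%N then 1 else 0.

Definition fmul (a b : fps) : fps :=
  fun n => \sum_(i < n.+1) a i * b (n - i)%N.

Fixpoint fpow (a : fps) (k : nat) : fps :=
  if k is k'.+1 then fmul a (fpow a k') else (fun n => if n == 0%N then 1 else 0).

Fixpoint fps_inv_upto (a : fps) (n : nat) : seq rat :=
  if n is n'.+1 then
    let l := fps_inv_upto a n' in
    rcons l (- (a 0%N)^-1 * \sum_(k < n'.+1) a k.+1 * l`_(n' - k))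
  else [:: (a 0%N)^-1].
Definition fps_inv (a : fps) : fps := fun n => (fps_inv_upto a n)`_n.

(* square root of a series with constant term 1 (the one with constant term 1):
   q 0 = 1, q n = (c n - sum_{k=1}^{n-1} q k q (n-k)) / 2 *)
Fixpoint fps_sqrt_upto (c : fps) (n : nat) : seq rat :=
  if n is n'.+1 then
    let l := fps_sqrt_upto c n' in
    rcons l ((c n'.+1 - \sum_(1 <= k < n'.+1) l`_k * l`_(n'.+1 - k)) / 2)
  else [:: 1].
Definition fps_sqrt (c : fps) : fps := fun n => (fps_sqrt_upto c n)`_n.

Definition riordan (g f : fps) (n k : nat) : rat := fmul g (fpow f k) n.

Definition riordan_poly (g f : fps) (n : nat) : {poly rat} :=
  \poly_(k < n.+1) riordan g f n k.

Definition moment_functional (mu : nat -> rat) (p : {poly rat}) : rat :=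
  \sum_(i < size p) p`_i * mu i.

Definition is_moment_sequence (mu : nat -> rat) (P : nat -> {poly rat}) : Prop :=
  (forall m n : nat, m <> n -> moment_functional mu (P m * P n) = 0) /\
  (forall n : nat, moment_functional mu (P n * P n) <> 0).

Definition catalan (k : nat) : rat := 'C(k.*2, k)%:R / k.+1%:R.

Definition large_schroeder (n : nat) : rat :=
  \sum_(k < n.+1) 'C(n + k, k.*2)%:R * catalan k.

(* sum s_n x^n = (1 + x - sqrt(1 - 6x + x^2)) / (4x) *)
Definition little_schroeder (n : nat) : rat :=
  (fps_of_seq [:: 1; 1] n.+1 - fps_sqrt (fps_of_seq [:: 1; -6; 1]) n.+1) / 4.

(* Main.v *)
Require Import Defs.
From mathcomp Require Import all_boot all_order all_algebra.
From mathcomp Require Import ring zify.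
Set Implicit Arguments. Unset Strict Implicit. Unset Printing Implicit Defensive.
Import Order.TTheory GRing.Theory Num.Theory.
Local Open Scope ring_scope.

Record eqm (N : nat) (p q : {poly rat}) : Prop :=
  Eqm { eqmP : forall i, (i < N)%N -> p`_i = q`_i }.
Arguments Eqm {N p q}.
Arguments eqmP {N p q} _ i _.
Definition tr (N : nat) (a : fps) : {poly rat} := \poly_(i < N) a i.

Lemma eqm_refl N p : eqm N p p. Proof. by constructor. Qed.
Lemma eqm_eq N p q : p = q -> eqm N p q. Proof. by move=> ->; constructor. Qed.
Lemma eqm_sym N p q : eqm N p q -> eqm N q p.
Proof. by move=> H; constructor=> i Hi; rewrite (eqmP H). Qed.
Lemma eqm_trans N p q r : eqm N p q -> eqm N q r -> eqm N p r.
Proof. by move=> H1 H2; constructor=> i Hi; rewrite (eqmP H1) ?(eqmP H2). Qed.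
Lemma eqm_le M N p q : (M <= N)%N -> eqm N p q -> eqm M p q.
Proof. by move=> HM H; constructor=> i Hi; apply: (eqmP H); apply: leq_trans HM. Qed.
Lemma eqm_add N p p' q q' : eqm N p p' -> eqm N q q' -> eqm N (p + q) (p' + q').
Proof. by move=> H1 H2; constructor=> i Hi; rewrite !coefD (eqmP H1) ?(eqmP H2). Qed.
Lemma eqm_opp N p p' : eqm N p p' -> eqm N (- p) (- p').
Proof. by move=> H1; constructor=> i Hi; rewrite !coefN (eqmP H1). Qed.
Lemma eqm_sub N p p' q q' : eqm N p p' -> eqm N q q' -> eqm N (p - q) (p' - q').
Proof. by move=> H1 H2; apply: eqm_add => //; apply: eqm_opp. Qed.
Lemma eqm_scale N c p p' : eqm N p p' -> eqm N (c *: p) (c *: p').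
Proof. by move=> H1; constructor=> i Hi; rewrite !coefZ (eqmP H1). Qed.
Lemma eqm_mul N p p' q q' : eqm N p p' -> eqm N q q' -> eqm N (p * q) (p' * q').
Proof.
move=> H1 H2; constructor=> i Hi; rewrite !coefM; apply: eq_bigr => j _.
have Hj : (j < N)%N by apply: leq_ltn_trans Hi; rewrite -ltnS.
rewrite (eqmP H1) // (eqmP H2) //; apply: leq_ltn_trans Hi; exact: leq_subr.
Qed.
Lemma eqm_mull N p q q' : eqm N q q' -> eqm N (p * q) (p * q').
Proof. by move=> H; apply: eqm_mul => //; apply: eqm_refl. Qed.
Lemma eqm_mulr N p p' q : eqm N p p' -> eqm N (p * q) (p' * q).
Proof. by move=> H; apply: eqm_mul => //; apply: eqm_refl. Qed.
Lemma eqm_exp N p p' k : eqm N p p' -> eqm N (p ^+ k) (p' ^+ k).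
Proof.
move=> H; elim: k => [|k IH]; first exact: eqm_refl.
by rewrite !exprS; apply: eqm_mul.
Qed.
Lemma eqm_X N p q : eqm N p q -> eqm N.+1 ('X * p) ('X * q).
Proof. by move=> H; constructor=> -[|i] Hi; rewrite !coefXM //= (eqmP H). Qed.
Lemma eqm_Xinv N p q : eqm N.+1 ('X * p) ('X * q) -> eqm N p q.
Proof. by move=> H; constructor=> i Hi; have := eqmP H i.+1 Hi; rewrite !coefXM. Qed.
Lemma eqm0 (p q : {poly rat}) : eqm 0 p q. Proof. by constructor. Qed.
Lemma coef_tr N a i : (tr N a)`_i = if (i < N)%N then a i else 0.
Proof. by rewrite coef_poly. Qed.
Lemma tr_le M N a : (M <= N)%N -> eqm M (tr N a) (tr M a).
Proof. move=> HM; constructor=> i Hi; rewrite !coef_tr Hi (leq_trans Hi HM) //. Qed.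
Lemma tr_fmul N a b : eqm N (tr N (fmul a b)) (tr N a * tr N b).
Proof.
constructor=> i Hi; rewrite coef_tr Hi coefM /fmul; apply: eq_bigr => j _.
have Hj : (j < N)%N by apply: leq_ltn_trans Hi; rewrite -ltnS.
rewrite !coef_tr Hj ifT //; apply: leq_ltn_trans Hi; exact: leq_subr.
Qed.
Ltac etr H := eapply eqm_trans; [exact: H|].

Lemma size_inv_upto a n : size (fps_inv_upto a n) = n.+1.
Proof. by elim: n => [|n IH] //=; rewrite size_rcons IH. Qed.
Lemma inv_upto_prefix a n m i : (n <= m)%N -> (i <= n)%N ->
  (fps_inv_upto a m)`_i = (fps_inv_upto a n)`_i.
Proof.
move=> Hnm Hi; elim: m Hnm => [|m IH]; first by rewrite leqn0 => /eqP ->.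
rewrite leq_eqVlt => /orP[/eqP -> //|Hnm].
rewrite /= nth_rcons size_inv_upto ifT; first exact: IH.
by apply: leq_ltn_trans Hi _.
Qed.
Lemma fps_inv0 a : fps_inv a 0 = (a 0%N)^-1. Proof. by []. Qed.
Lemma fps_invS a n : fps_inv a n.+1 =
  - (a 0%N)^-1 * \sum_(k < n.+1) a k.+1 * fps_inv a (n - k)%N.
Proof.
rewrite /fps_inv /= nth_rcons size_inv_upto ltnn eqxx; congr (_ * _).
apply: eq_bigr => k _; congr (_ * _).
by rewrite (inv_upto_prefix a (leq_subr k n) (leqnn _)).
Qed.
Lemma fmul_inv a : a 0%N != 0 -> forall n, fmul a (fps_inv a) n = (n == 0%N)%:R.
Proof.
move=> Ha [|n]; rewrite /fmul.
  by rewrite big_ord1 subn0 fps_inv0 divff.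
rewrite big_ord_recl subn0 fps_invS mulrA mulrN divff // mulN1r.
rewrite /= addrC; apply/eqP; rewrite subr_eq0; apply/eqP.
by apply: eq_bigr => k _; rewrite /bump /= add1n subSS.
Qed.
Lemma tr_inv N a : a 0%N != 0 -> eqm N (tr N a * tr N (fps_inv a)) 1.
Proof.
move=> Ha; etr (eqm_sym (tr_fmul N a (fps_inv a))).
by constructor=> i Hi; rewrite coef_tr Hi fmul_inv // coef1.
Qed.

Lemma size_sqrt_upto c n : size (fps_sqrt_upto c n) = n.+1.
Proof. by elim: n => [|n IH] //=; rewrite size_rcons IH. Qed.
Lemma sqrt_upto_prefix c n m i : (n <= m)%N -> (i <= n)%N ->
  (fps_sqrt_upto c m)`_i = (fps_sqrt_upto c n)`_i.
Proof.
move=> Hnm Hi; elim: m Hnm => [|m IH]; first by rewrite leqn0 => /eqP ->.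
rewrite leq_eqVlt => /orP[/eqP -> //|Hnm].
rewrite /= nth_rcons size_sqrt_upto ifT; first exact: IH.
by apply: leq_ltn_trans Hi _.
Qed.
Lemma fps_sqrt0 c : fps_sqrt c 0 = 1. Proof. by []. Qed.
Lemma fps_sqrtS c n : fps_sqrt c n.+1 =
  (c n.+1 - \sum_(k < n) fps_sqrt c k.+1 * fps_sqrt c (n - k)%N) / 2.
Proof.
have -> : fps_sqrt c n.+1 = (fps_sqrt_upto c n.+1)`_n.+1 by [].
rewrite [fps_sqrt_upto c n.+1]/= nth_rcons size_sqrt_upto ltnn eqxx; congr ((_ - _) / _).
rewrite big_add1 -pred_Sn big_mkord; apply: eq_bigr => k _.
rewrite subSS (sqrt_upto_prefix c (ltn_ord k) (leqnn _)).
by rewrite (sqrt_upto_prefix c (leq_subr k n) (leqnn _)).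
Qed.
Lemma fmul_sqrt c : c 0%N = 1 -> forall n, fmul (fps_sqrt c) (fps_sqrt c) n = c n.
Proof.
move=> Hc [|n]; rewrite /fmul.
  by rewrite big_ord1 Hc fps_sqrt0 mulr1.
rewrite big_ord_recl big_ord_recr /= subn0 subnn fps_sqrt0 mul1r mulr1.
rewrite fps_sqrtS.
set B := \sum_(k < n) fps_sqrt c k.+1 * _.
by field.
Qed.
Lemma tr_sqrt N c : c 0%N = 1 ->
  eqm N (tr N (fps_sqrt c) * tr N (fps_sqrt c)) (tr N c).
Proof.
move=> Hc; etr (eqm_sym (tr_fmul N (fps_sqrt c) (fps_sqrt c))).
by constructor=> i Hi; rewrite !coef_tr Hi fmul_sqrt.
Qed.

Lemma eqm_subr N p q : eqm N (p - q) 0 -> eqm N p q.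
Proof.
move=> H; constructor=> i Hi; have := eqmP H i Hi.
by rewrite coefB coef0 => /eqP; rewrite subr_eq0 => /eqP.
Qed.

Lemma eqm_Cinv N c p : c != 0 -> eqm N (c%:P * p) 0 -> eqm N p 0.
Proof.
move=> Hc H; constructor=> i Hi; have := eqmP H i Hi.
by rewrite coefCM coef0 => /eqP; rewrite mulf_eq0 (negbTE Hc) /= => /eqP.
Qed.

Lemma little_rel N : eqm N (tr N little_schroeder)
  (1 + 'X * (- tr N little_schroeder + 2%:P * tr N little_schroeder ^+ 2)).
Proof.
set c := fps_of_seq [:: 1; -6; 1].
set q := fps_sqrt c.
set s := little_schroeder.
have hc : forall M, eqm M (tr M c) (1 - 6%:P * 'X + 'X^2).
  move=> M; constructor=> i Hi; rewrite coef_tr Hi !coefE.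
  case: i Hi => [|[|[|i]]] Hi; rewrite /c /fps_of_seq /= ?mulr0 ?mulr1 ?addr0 ?sub0r ?subr0 ?add0r ?nth_nil; reflexivity.
have hq : forall M, eqm M (tr M q) (1 + 'X - 4%:P * ('X * tr M s)).
  move=> M; constructor=> i Hi; rewrite coef_tr Hi !coefE.
  case: i Hi => [|j] Hj //=.
  rewrite ifT ?(ltnW Hj) // /s /little_schroeder -/c -/q.
  case: j Hj => [|j] Hj.
  - have -> : fps_of_seq [:: 1; 1] 1 = 1 by [].
    have -> : ((1 == 1)%N%:R : rat) = 1 by [].
    by field.
  - have -> : fps_of_seq [:: 1; 1] j.+2 = 0 by rewrite /fps_of_seq /= ?nth_nil.
    have -> : ((j.+2 == 1)%N%:R : rat) = 0 by [].
    by field.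
have hsq := tr_sqrt N.+1 (erefl (c 0%N) : c 0%N = 1).
set S := tr N.+1 s.
have h1 : eqm N.+1 ((1 + 'X - 4%:P * ('X * S)) * (1 + 'X - 4%:P * ('X * S)))
                   (1 - 6%:P * 'X + 'X^2).
  apply: eqm_trans (eqm_mul (eqm_sym (hq _)) (eqm_sym (hq _))) _.
  exact: eqm_trans hsq (hc _).
have h2 : eqm N.+1 ('X * (8%:P * (1 - (1 + 'X) * S + 2%:P * 'X * S ^+ 2))) ('X * 0).
  have -> : 'X * (8%:P * (1 - (1 + 'X) * S + 2%:P * 'X * S ^+ 2)) =
    (1 + 'X - 4%:P * ('X * S)) * (1 + 'X - 4%:P * ('X * S)) - (1 - 6%:P * 'X + 'X^2).
    ring.
  etr (eqm_sub h1 (eqm_refl N.+1 (1 - 6%:P * 'X + 'X^2))).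
  by apply: eqm_eq; rewrite subrr mulr0.
have h3 := eqm_Cinv (isT : (8 : rat) != 0) (eqm_Xinv h2).
have h4 : eqm N S (1 + 'X * (- S + 2%:P * S ^+ 2)).
  apply: eqm_subr.
  have -> : S - (1 + 'X * (- S + 2%:P * S ^+ 2)) = - (1 - (1 + 'X) * S + 2%:P * 'X * S ^+ 2).
    ring.
  rewrite -oppr0; exact: eqm_opp.
have h5 := tr_le s (leqnSn N).
etr (eqm_sym h5); etr h4.
apply: eqm_add; first exact: eqm_refl.
apply: eqm_mull; apply: eqm_add; first exact: eqm_opp.
by apply: eqm_mull; apply: eqm_exp.
Qed.

Definition Phi (a0 a1 a2 : rat) (p : {poly rat}) := a0%:P + a1%:P * p + a2%:P * p ^+ 2.
Lemma eqm_Phi N a0 a1 a2 p q : eqm N p q -> eqm N (Phi a0 a1 a2 p) (Phi a0 a1 a2 q).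
Proof.
move=> H; rewrite /Phi; apply: eqm_add; first apply: eqm_add.
- exact: eqm_refl.
- exact: eqm_mull.
- by apply: eqm_mull; apply: eqm_exp.
Qed.

Lemma uniq_quad (A B : fps) (c a0 a1 a2 : rat) :
  (forall N, eqm N (tr N A) (c%:P + 'X * Phi a0 a1 a2 (tr N A))) ->
  (forall N, eqm N (tr N B) (c%:P + 'X * Phi a0 a1 a2 (tr N B))) ->
  forall n, A n = B n.
Proof.
move=> HA HB.
suff H : forall n i, (i <= n)%N -> A i = B i by move=> n; exact: (H n n).
elim=> [|n IH] i.
  rewrite leqn0 => /eqP ->.
  have := eqmP (HA 1%N) 0%N isT; have := eqmP (HB 1%N) 0%N isT.
  by rewrite !coef_tr /= !coefE /= => -> ->.
rewrite leq_eqVlt => /orP[/eqP ->|]; last exact: IH.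
have E : eqm n.+1 (tr n.+2 A) (tr n.+2 B).
  by constructor=> j Hj; rewrite !coef_tr (ltn_trans Hj (ltnSn _)) IH.
have := eqmP (HA n.+2) n.+1 (ltnSn _); have := eqmP (HB n.+2) n.+1 (ltnSn _).
rewrite !coef_tr ltnSn !coefD !coefC !coefXM /= => -> ->.
by rewrite (eqmP (eqm_Phi a0 a1 a2 E) n (ltnSn _)).
Qed.

Definition Wf : fps := fun n => little_schroeder n - (n == 0)%N%:R.

Lemma tr_Wf N : eqm N (tr N Wf) (tr N little_schroeder - 1).
Proof. by constructor=> i Hi; rewrite coefB !coef_tr Hi coef1. Qed.

Lemma Wf_rel N : eqm N (tr N Wf) ('X * (1 + 3%:P * tr N Wf + 2%:P * tr N Wf ^+ 2)).
Proof.
set S := tr N little_schroeder.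
etr (tr_Wf N).
apply: eqm_trans (eqm_sub (little_rel N) (eqm_refl N 1)) _.
apply: eqm_sym.
have h : eqm N (1 + 3%:P * tr N Wf + 2%:P * tr N Wf ^+ 2)
               (1 + 3%:P * (S - 1) + 2%:P * (S - 1) ^+ 2).
  apply: eqm_add; first apply: eqm_add.
  - exact: eqm_refl.
  - by apply: eqm_mull; apply: tr_Wf.
  - by apply: eqm_mull; apply: eqm_exp; apply: tr_Wf.
etr (eqm_mull 'X h); apply: eqm_eq; rewrite /S; ring.
Qed.

Lemma bin_ratio i : (i.+1 * 'C((i.+1).*2, i.+1) = (4 * i + 2) * 'C(i.*2, i))%N.
Proof.
have h1 := mul_bin_diag (i.+1).*2 i.
have h2 := mul_bin_down i.*2.+1 i.
rewrite doubleS /= in h1 *.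
move: h1 h2; rewrite -!muln2.
set x := 'C(_, i); set y := 'C(_, i); set z := 'C(_, i.+1).
move: x y z => x y z; nia.
Qed.

Lemma catalan0 : catalan 0 = 1.
Proof. by rewrite /catalan bin0 divr1. Qed.

Lemma cat_ratio i : catalan i.+1 * i.+2%:R = catalan i * (4 * i.+1%:R - 2).
Proof.
rewrite /catalan.
have h := bin_ratio i.
have h' : (i.+1%:R * 'C((i.+1).*2, i.+1)%:R = (4 * i + 2)%:R * 'C(i.*2, i)%:R :> rat).
  by rewrite -!natrM h.
have n1 : (i.+1%:R : rat) != 0 by rewrite pnatr_eq0.
have n2 : (i.+2%:R : rat) != 0 by rewrite pnatr_eq0.
rewrite divfK //; apply: (mulfI n1); rewrite h'.
move: n1; rewrite natrD natrM -!natr1 => n1; by field.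
Qed.

Lemma cat_ode N : eqm N ((1 - 4%:P * 'X) * ('X * tr N catalan)^`())
                        (1 - 2%:P * ('X * tr N catalan)).
Proof.
constructor=> j Hj.
have -> : (1 - 4%:P * 'X) * ('X * tr N catalan)^`() =
  ('X * tr N catalan)^`() - 4%:P * ('X * ('X * tr N catalan)^`()) by ring.
rewrite !coefB !coefCM !coefXM !coef_deriv !coefXM coef1.
case: j Hj => [|i] Hi /=.
  by rewrite coef_tr Hi catalan0 mulr0 !subr0.
rewrite !coef_tr Hi (ltn_trans (ltnSn i) Hi) /= -(mulr_natr (catalan i.+1)) -(mulr_natr (catalan i)).
rewrite cat_ratio; ring.
Qed.

Lemma cat_rel N : eqm N (tr N catalan) (1 + 'X * tr N catalan ^+ 2).
Proof.
set C := tr N catalan.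
set F := 'X * C.
set H := 'X + F ^+ 2 - F.
have hH : eqm N ((1 - 4%:P * 'X) * H^`()) (- 4%:P * H).
  have -> : H^`() = 1 + 2%:P * F * F^`() - F^`().
    rewrite /H derivB derivD derivX expr2 derivM; ring.
  have -> : (1 - 4%:P * 'X) * (1 + 2%:P * F * F^`() - F^`()) =
     (1 - 4%:P * 'X) + (2%:P * F - 1) * ((1 - 4%:P * 'X) * F^`()) by ring.
  etr (eqm_add (eqm_refl N (1 - 4%:P * 'X)) (eqm_mull (2%:P * F - 1) (cat_ode N))).
  apply: eqm_eq; rewrite /H /F /C; ring.
have E1 : (1 - 4%:P * 'X) * H^`() = H^`() - 4%:P * ('X * H^`()) by ring.
have H0 : forall j, (j <= N)%N -> H`_j = 0.
  elim=> [|j IH] Hj.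
    by rewrite /H coefB coefD coefX expr2 coef0M /F coefXM /= !(mul0r, add0r, oppr0, addr0).
  move: (eqmP hH j Hj); rewrite E1 mulNr coefN coefB !coefCM coefXM !coef_deriv.
  rewrite (IH (ltnW Hj)) oppr0.
  case: j IH Hj => [|k] IH Hj /=.
    by rewrite mulr0 subr0 => /eqP; rewrite mulrn_eq0 => /orP[|/eqP].
  by rewrite (IH (ltnW Hj)) mul0rn mulr0 subr0 => /eqP; rewrite mulrn_eq0 => /orP[|/eqP].
have hX : eqm N.+1 ('X * (1 + 'X * C ^+ 2 - C)) ('X * 0).
  constructor=> j Hj; rewrite mulr0 coef0.
  have -> : 'X * (1 + 'X * C ^+ 2 - C) = H by rewrite /H /F; ring.
  exact: H0.
exact: eqm_sym (eqm_subr (eqm_Xinv hX)).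
Qed.

Lemma sum_widen (F : nat -> rat) n m : (n <= m)%N ->
  (forall i, (n <= i < m)%N -> F i = 0) ->
  \sum_(i < m) F i = \sum_(i < n) F i.
Proof.
move=> Hnm HF.
rewrite -!(big_mkord (fun _ => true)) (@big_cat_nat _ _ _ n 0 m _ _ (leq0n n) Hnm) /=.
rewrite [X in _ + X]big1_seq ?addr0 // => i /andP[_]; rewrite mem_index_iota.
exact: HF.
Qed.

Section Comp.
Variable N : nat.
Let R := tr N (fun _ => 1).

Lemma Rrel : eqm N R (1 + 'X * R).
Proof.
constructor=> i Hi; rewrite coefD coef1 coefXM /R !coef_tr Hi.
by case: i Hi => [|i] Hi //=; rewrite add0r (ltn_trans (ltnSn i) Hi).
Qed.

Lemma Rpow m n : (n < N)%N -> (R ^+ m.+1)`_n = 'C(n + m, m)%:R.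
Proof.
have hR2 : forall m, eqm N (R ^+ m.+2) (R ^+ m.+1 + 'X * R ^+ m.+2).
  move=> k; rewrite exprSr; etr (eqm_mull (R ^+ k.+1) Rrel).
  by apply: eqm_eq; rewrite !exprS; ring.
elim: m n => [|m IHm] n Hn.
  by rewrite expr1 /R coef_tr Hn addn0 bin0.
elim: n Hn => [|n IHn] Hn.
  rewrite (eqmP (hR2 m) 0%N Hn) coefD coefXM /= addr0 IHm //.
  by rewrite !add0n !binn.
rewrite (eqmP (hR2 m) n.+1 Hn) coefD coefXM /= IHm // IHn ?(ltnW Hn) //.
rewrite -natrD addSn binS.
have -> : (n + m).+1 = (n + m.+1)%N by rewrite addnS.
by rewrite addnC.
Qed.

Lemma RY k n : (n < N)%N -> (R * ('X * R ^+ 2) ^+ k)`_n = 'C(n + k, k.*2)%:R.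
Proof.
move=> Hn.
rewrite exprMn -exprM mulrCA -exprS coefXnM.
case: ltnP => Hk.
  by rewrite bin_small //; rewrite -addnn ltn_add2r.
rewrite Rpow; last by apply: leq_ltn_trans Hn; exact: leq_subr.
by congr (_%:R); congr 'C(_, _); rewrite -?muln2; lia.
Qed.
End Comp.

Lemma comp_eqm N p q Z : eqm N p q -> eqm N (p \Po ('X * Z)) (q \Po ('X * Z)).
Proof.
move=> H; apply: eqm_subr; rewrite -comp_polyB.
set d := p - q.
have hd : take_poly N d = 0.
  apply/polyP => i; rewrite coef_take_poly coef0; case: ifP => // Hi.
  by rewrite coefB (eqmP H) // subrr.
rewrite -(poly_take_drop N d) hd add0r comp_polyM comp_Xn_poly exprMn mulrCA.
by constructor=> i Hi; rewrite coefXnM Hi coef0.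
Qed.

Lemma large_rel N : eqm N (tr N large_schroeder)
  (1 + 'X * (tr N large_schroeder + tr N large_schroeder ^+ 2)).
Proof.
set S := tr N large_schroeder.
set C := tr N catalan.
set R := tr N (fun _ => 1).
set Y := 'X * R ^+ 2.
set E := C \Po Y.
have hSE : eqm N S (R * E).
  constructor=> n Hn.
  rewrite /S coef_tr Hn /E comp_polyE mulr_sumr coef_sum.
  under eq_bigr => i _ do rewrite -scalerAr coefZ (RY i Hn).
  have e1 : \sum_(i < N) C`_i * 'C(n + i, i.*2)%:R =
            \sum_(i < size C) C`_i * 'C(n + i, i.*2)%:R.
    apply: (sum_widen (F := fun i => C`_i * 'C(n + i, i.*2)%:R) (size_poly N catalan : (size C <= N)%N)).
    by move=> i /andP[Hi _]; rewrite nth_default // mul0r.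
  rewrite -e1.
  have e2 : \sum_(i < N) C`_i * 'C(n + i, i.*2)%:R =
            \sum_(i < N) catalan i * 'C(n + i, i.*2)%:R.
    by apply: eq_bigr => i _; rewrite /C coef_tr ltn_ord.
  rewrite e2 (sum_widen (F := fun i => catalan i * 'C(n + i, i.*2)%:R) Hn).
    by rewrite /large_schroeder; apply: eq_bigr => i _; rewrite mulrC.
  move=> i /andP[Hi _]; rewrite bin_small ?mulr0 //.
  by rewrite -addnn ltn_add2r.
have hE : eqm N E (1 + Y * E ^+ 2).
  etr (comp_eqm (R ^+ 2) (cat_rel N)).
  apply: eqm_eq.
  by rewrite comp_polyD (comp_poly_multiplicative _).2 comp_polyM comp_polyX !expr2 comp_polyM.
have hYE : eqm N (Y * E ^+ 2) (E - 1).
  apply: eqm_sym; etr (eqm_sub hE (eqm_refl N 1)); apply: eqm_eq; ring.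
clearbody E S; apply: eqm_sym.
etr (eqm_add (eqm_refl N 1) (eqm_mull 'X (eqm_add hSE (eqm_exp 2 hSE)))).
have -> : 1 + 'X * (R * E + (R * E) ^+ 2) = 1 + 'X * R * E + Y * E ^+ 2.
  by rewrite /Y; ring.
etr (eqm_add (eqm_refl N (1 + 'X * R * E)) hYE).
have -> : 1 + 'X * R * E + (E - 1) = E * (1 + 'X * R) by ring.
etr (eqm_mull E (eqm_sym (Rrel N))).
apply: eqm_sym; etr hSE; apply: eqm_eq; by rewrite /R mulrC.
Qed.

Section Riordan.
Variable beta : rat.
Hypothesis hbeta : beta * (3 - beta) = 2.

Let g := fps_inv (fps_of_seq [:: 1; beta]).
Let h := fps_inv (fps_of_seq [:: 1; 3; 2]).
Let f := fmul fX h.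
Let Q : {poly rat} := 1 + 3%:P * 'X + 2%:P * 'X ^+ 2.
Let T n k := riordan g f n k.

Lemma Qfact : (1 + beta%:P * 'X) * (1 + (3 - beta)%:P * 'X) = Q.
Proof.
rewrite /Q -hbeta.
rewrite !polyCB !polyCM; ring.
Qed.

Lemma trg N : eqm N (tr N g * (1 + beta%:P * 'X)) 1.
Proof.
have ha : eqm N (tr N (fps_of_seq [:: 1; beta])) (1 + beta%:P * 'X).
  constructor=> i Hi; rewrite coef_tr Hi coefD coef1 coefCM coefX.
  by case: i Hi => [|[|i]] Hi; rewrite /fps_of_seq /= ?nth_nil; ring.
rewrite mulrC; etr (eqm_mulr (tr N g) (eqm_sym ha)).
by apply: tr_inv.
Qed.

Lemma trh N : eqm N (tr N h * Q) 1.
Proof.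
have ha : eqm N (tr N (fps_of_seq [:: 1; 3; 2])) Q.
  constructor=> i Hi; rewrite coef_tr Hi /Q coefD coefD coef1 !coefCM coefX coefXn.
  by case: i Hi => [|[|[|i]]] Hi; rewrite /fps_of_seq /= ?nth_nil; ring.
rewrite mulrC; etr (eqm_mulr (tr N h) (eqm_sym ha)).
by apply: tr_inv.
Qed.

Lemma trf N : eqm N (tr N f) ('X * tr N h).
Proof.
etr (tr_fmul N fX h); apply: eqm_mulr.
constructor=> i Hi; rewrite coef_tr Hi coefX /fX.
by case: (i == 1%N).
Qed.

Lemma trfpow N k : eqm N (tr N (fpow f k)) (('X * tr N h) ^+ k).
Proof.
elim: k => [|k IH].
  constructor=> i Hi; rewrite coef_tr Hi coef1 /=.
  by case: (i == 0%N).
rewrite /= exprS; etr (tr_fmul N f (fpow f k)).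
exact: eqm_mul (trf N) IH.
Qed.

Lemma Tpoly N n k : (n < N)%N -> T n k = (tr N g * ('X * tr N h) ^+ k)`_n.
Proof.
move=> Hn; rewrite /T /riordan.
have := eqmP (tr_fmul N g (fpow f k)) n Hn; rewrite coef_tr Hn => ->.
exact: eqmP (eqm_mull _ (trfpow N k)) n Hn.
Qed.

Lemma T_vanish n k : (n < k)%N -> T n k = 0.
Proof.
move=> Hk; rewrite (Tpoly k (ltnSn n)).
by rewrite exprMn mulrCA coefXnM Hk.
Qed.

Lemma G0 N : (0 < N)%N -> (tr N g)`_0 = 1.
Proof.
move=> HN; have := eqmP (trg N) 0%N HN.
by rewrite coef0M coefD coef1 coefCM coefX /= mulr0 addr0 mulr1.
Qed.

Lemma T00 : T 0 0 = 1.
Proof. by rewrite (Tpoly 0 (ltnSn 0)) expr0 mulr1 G0. Qed.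

Lemma T10 : T 1 0 = - beta.
Proof.
rewrite (Tpoly 0 (ltnSn 1)) expr0 mulr1.
have := eqmP (trg 2) 1%N isT.
have -> : tr 2 g * (1 + beta%:P * 'X) = tr 2 g + beta%:P * ('X * tr 2 g) by ring.
rewrite coefD coefCM coefXM coef1 /= G0 // mulr1 => /eqP.
by rewrite addr_eq0 => /eqP.
Qed.

Lemma T11 : T 1 1 = 1.
Proof.
rewrite (Tpoly 1 (ltnSn 1)) expr1 mulrCA coefXM /= coef0M G0 // mul1r.
have := eqmP (trh 2) 0%N isT.
by rewrite coef0M /Q !coefD coef1 !coefCM coefX coefXn /= mulr0 !addr0 mulr1.
Qed.

Lemma Trec n k : T n.+2 k + 3 * T n.+1 k + 2 * T n k =
  if k is k'.+1 then T n.+1 k' else 0.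
Proof.
set N := n.+3.
have hN2 : (n.+2 < N)%N by [].
rewrite (Tpoly k hN2) (Tpoly k (ltn_trans (ltnSn _) hN2)) (Tpoly k (ltnW (ltn_trans (ltnSn _) hN2))).
set G := tr N g; set H := tr N h.
set p := G * ('X * H) ^+ k.
have e1 : p`_n.+2 + 3 * p`_n.+1 + 2 * p`_n = (Q * p)`_n.+2.
  have -> : Q * p = p + 3%:P * ('X * p) + 2%:P * ('X * ('X * p)) by rewrite /Q; ring.
  by rewrite !coefD !coefCM !coefXM.
rewrite e1; clear e1.
case: k @p => [|k] p.
  have hQG : eqm N (Q * G) (1 + (3 - beta)%:P * 'X).
    rewrite -Qfact.
    have -> : (1 + beta%:P * 'X) * (1 + (3 - beta)%:P * 'X) * G =
              G * (1 + beta%:P * 'X) * (1 + (3 - beta)%:P * 'X) by ring.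
    etr (eqm_mulr (1 + (3 - beta)%:P * 'X) (trg N)).
    by apply: eqm_eq; rewrite mul1r.
  rewrite /p expr0 mulr1 (eqmP hQG _ (ltnSn _)).
  by rewrite coefD coef1 coefCM coefX /= mulr0 addr0.
have e2 : Q * p = 'X * (G * ('X * H) ^+ k) * (H * Q).
  by rewrite /p exprSr; ring.
rewrite e2 (eqmP (eqm_mull ('X * (G * ('X * H) ^+ k)) (trh N)) _ (ltnSn _)).
rewrite mulr1 coefXM /=.
by rewrite (Tpoly k (ltn_trans (ltnSn _) hN2)).
Qed.

Definition bcoef (k : nat) : rat := if k is _.+1 then 3 else beta.
Definition lcoef (k : nat) : rat := if k is _.+1 then 2 else 0.

Lemma coef_rpoly n k : (riordan_poly g f n)`_k = T n k.
Proof.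
rewrite /riordan_poly coef_poly; case: ltnP => // Hk.
by rewrite T_vanish.
Qed.

Lemma rpoly0 : riordan_poly g f 0 = 1.
Proof.
apply/polyP => j; rewrite coef_rpoly coef1.
by case: j => [|j]; rewrite ?T00 // T_vanish.
Qed.

Lemma rpoly_rec k : 'X * riordan_poly g f k =
  riordan_poly g f k.+1 + bcoef k *: riordan_poly g f k + lcoef k *: riordan_poly g f k.-1.
Proof.
apply/polyP => j; rewrite coefXM !coefD !coefZ !coef_rpoly.
case: k => [|m] /=.
  rewrite mul0r addr0.
  case: j => [|[|j]] /=.
  - by rewrite T10 T00 mulr1 addrC subrr.
  - by rewrite T11 (@T_vanish 0 1) // T00 mulr0 addr0.
  - by rewrite !T_vanish // mulr0 addr0.
have := Trec m j.
case: j => [|j] /= => <-; ring.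
Qed.

End Riordan.

Section Lin.
Variable mu : nat -> rat.
Let L := moment_functional mu.

Lemma mf_widen (p : {poly rat}) N : (size p <= N)%N -> L p = \sum_(i < N) p`_i * mu i.
Proof.
move=> Hs; rewrite /L /moment_functional.
symmetry; apply: (sum_widen (F := fun i => p`_i * mu i) Hs).
by move=> i /andP[Hi _]; rewrite nth_default // mul0r.
Qed.

Lemma mfD (p q : {poly rat}) : L (p + q) = L p + L q.
Proof.
set N := maxn (size p) (size q).
rewrite (mf_widen (size_polyD p q)) (@mf_widen p N) ?leq_maxl //.
rewrite (@mf_widen q N) ?leq_maxr // -big_split /=.
by apply: eq_bigr => i _; rewrite coefD mulrDl.
Qed.

Lemma mfZ c (p : {poly rat}) : L (c *: p) = c * L p.
Proof.
rewrite (mf_widen (size_scale_leq c p)) /L /moment_functional mulr_sumr.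
by apply: eq_bigr => i _; rewrite coefZ mulrA.
Qed.

Lemma mfXn n : L 'X^n = mu n.
Proof.
rewrite /L /moment_functional size_polyXn big_ord_recr /= coefXn eqxx mul1r.
rewrite big1 ?add0r // => i _.
by rewrite coefXn (ltn_eqF (ltn_ord i)) mul0r.
Qed.
End Lin.

Lemma ortho_gen (mu : nat -> rat) (P : nat -> {poly rat}) (b l : nat -> rat) :
  P 0%N = 1 ->
  (forall k, 'X * P k = P k.+1 + b k *: P k + l k *: P k.-1) ->
  l 0%N = 0 -> (forall k, l k.+1 != 0) ->
  (forall k, moment_functional mu (P k) = (k == 0)%N%:R) ->
  is_moment_sequence mu P.
Proof.
move=> P0 Hrec l0 lnz HL.
set L := moment_functional mu.
set a := fun m n => L (P m * P n).
set Lam := fun n => \prod_(i < n) l i.+1.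
have key : forall m n, a m n.+1 =
    a m.+1 n + (b m - b n) * a m n + l m * a m.-1 n - l n * a m n.-1.
  move=> m n.
  have E : ('X * P m) * P n = P m * ('X * P n) by rewrite mulrCA mulrA.
  rewrite !Hrec mulrDl mulrDl mulrDr mulrDr -!scalerAl -!scalerAr in E.
  have := congr1 L E; rewrite /L !mfD !mfZ -/L.
  move=> HE; rewrite /a.
  apply: (addIr (b n * L (P m * P n) + l n * L (P m * P n.-1))).
  rewrite addrA -HE; ring.
pose A n := forall m, a m n = if m == n then Lam n else 0.
have A0 : A 0%N.
  move=> m; rewrite /a P0 mulr1 /L HL /Lam big_ord0.
  by case: m.
have step : forall n, A n -> A n.-1 -> A n.+1.
  move=> n An An1 m; rewrite key !An An1.
  have LS : Lam n.+1 = Lam n * l n.+1 by rewrite /Lam big_ord_recr.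
  case: n An An1 LS => [|n] An An1 LS.
    rewrite l0 mul0r subr0.
    case: m => [|[|m]] /=; rewrite ?mul0r ?mulr0 ?addr0 ?add0r //.
    + by rewrite subrr l0 !mul0r addr0.
    + by rewrite LS mulrC.
  have LS' : Lam n.+1 = Lam n * l n.+1 by rewrite /Lam big_ord_recr.
  case: m => [|m] /=.
    rewrite !mulr0 !addr0 eqSS; case: (0%N =P n) => [E0|N0].
      by subst n; rewrite LS' mulrC subrr.
    by rewrite mulr0 subr0.
  rewrite !eqSS.
  case: (m.+1 =P n) => [E1|N1]; case: (m =P n) => [E2|N2];
    case: (m =P n.+1) => [E3|N3]; try (exfalso; lia);
    try subst; rewrite ?LS ?LS'; ring.
have Aall : forall n, A n /\ A n.-1.
  elim=> [|n [IH1 IH2]]; first by split.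
  by split => //; apply: step.
have Lnz : forall n, Lam n != 0.
  elim=> [|n IH]; first by rewrite /Lam big_ord0 oner_neq0.
  by rewrite /Lam big_ord_recr mulf_neq0.
split.
  move=> m n Hmn; have := (Aall n).1 m; rewrite /a /L => ->.
  by move/eqP: Hmn => /negbTE ->.
by move=> n; have := (Aall n).1 n; rewrite /a /L => ->; rewrite eqxx; apply/eqP; exact: Lnz.
Qed.

Lemma LP_delta (mu : fps) (P : nat -> {poly rat}) (beta : rat) (W : fps) :
  P 0%N = 1 ->
  (forall k, 'X * P k = P k.+1 + bcoef beta k *: P k + lcoef k *: P k.-1) ->
  (forall N, eqm N (tr N mu) (1 + 'X * (tr N mu * (beta%:P + 2%:P * tr N W)))) ->
  (forall N, eqm N (tr N W) ('X * (1 + 3%:P * tr N W + 2%:P * tr N W ^+ 2))) ->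
  forall k, moment_functional mu (P k) = (k == 0)%N%:R.
Proof.
move=> P0 Hrec hM hW.
set c := fun n k => (tr n.+1 mu * tr n.+1 W ^+ k)`_n.
have cN : forall N n k, (n < N)%N -> (tr N mu * tr N W ^+ k)`_n = c n k.
  move=> N n k Hn.
  exact: (eqmP (eqm_mul (tr_le mu Hn) (eqm_exp k (tr_le W Hn))) n (ltnSn n)).
have crec : forall n k, c n.+1 k =
    (if k is k'.+1 then c n k' else 0) + bcoef beta k * c n k + 2 * c n k.+1.
  move=> n k; set N := n.+2.
  have hn : (n < N)%N by rewrite /N.
  case: k => [|k] /=.
    rewrite -(cN N n.+1 0%N) // -(cN N n 0%N) // -(cN N n 1%N) // !expr0 !mulr1 expr1.
    rewrite (eqmP (hM N) n.+1 (ltnSn _)) coefD coef1 coefXM /=.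
    have -> : tr N mu * (beta%:P + 2%:P * tr N W) =
              beta%:P * tr N mu + 2%:P * (tr N mu * tr N W) by ring.
    rewrite coefD !coefCM; ring.
  rewrite -(cN N n.+1 k.+1) // -(cN N n k) // -(cN N n k.+1) // -(cN N n k.+2) //.
  have e : tr N mu * tr N W ^+ k.+1 = tr N mu * tr N W ^+ k * tr N W by rewrite exprSr mulrA.
  rewrite e (eqmP (eqm_mull (tr N mu * tr N W ^+ k) (hW N)) n.+1 (ltnSn _)).
  have -> : tr N mu * tr N W ^+ k * ('X * (1 + 3%:P * tr N W + 2%:P * tr N W ^+ 2)) =
     'X * (tr N mu * tr N W ^+ k + 3%:P * (tr N mu * tr N W ^+ k.+1) +
           2%:P * (tr N mu * tr N W ^+ k.+2)) by rewrite !exprS; ring.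
  by rewrite coefXM /= !coefD !coefCM -e.
have mu0 : (tr 1 mu)`_0 = 1.
  by rewrite (eqmP (hM 1%N) 0%N isT) coefD coef1 coefXM.
have W0 : (tr 1 W)`_0 = 0.
  by rewrite (eqmP (hW 1%N) 0%N isT) coefXM.
have c0k : forall k, c 0%N k = (k == 0)%N%:R.
  case=> [|k]; rewrite /c.
    by rewrite expr0 mulr1 mu0.
  by rewrite exprS mulrCA coef0M W0 mul0r.
have cn0 : forall n, c n 0%N = mu n.
  by move=> n; rewrite /c expr0 mulr1 coef_tr ltnSn.
set L := moment_functional mu.
set d := fun n k => L ('X^n * P k).
have dstep : forall n k,
    d n k.+1 = d n.+1 k - bcoef beta k * d n k - lcoef k * d n k.-1.
  move=> n k.
  have E : d n.+1 k = d n k.+1 + bcoef beta k * d n k + lcoef k * d n k.-1.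
    rewrite /d exprSr -mulrA Hrec !mulrDr -!scalerAr /L !mfD !mfZ //.
  by rewrite E; ring.
set e := fun n k => 2 ^+ k * c n k.
have estep : forall n k,
    e n k.+1 = e n.+1 k - bcoef beta k * e n k - lcoef k * e n k.-1.
  move=> n k; rewrite /e crec.
  case: k => [|k] /=; rewrite ?expr0 ?expr1; first by ring.
  by rewrite !exprS; ring.
have main : forall k, (forall n, d n k = e n k) /\ (forall n, d n k.+1 = e n k.+1).
  have base : forall n, d n 0%N = e n 0%N.
    by move=> n; rewrite /d /e P0 mulr1 /L mfXn expr0 mul1r cn0.
  elim=> [|k [H0 H1]].
    split=> // n; rewrite dstep estep /=.
    by rewrite !base.
  split=> // n; rewrite dstep estep /=.
  by rewrite !H1 H0.
move=> k; have := (main k).1 0%N.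
rewrite /d /e expr0 mul1r /L => ->.
rewrite c0k; case: k => [|k] /=; first by rewrite mul1r.
by rewrite mulr0.
Qed.

Definition Bf : fps := fun n => (n == 0)%N%:R + 2 * Wf n.

Lemma tr_Bf N : eqm N (tr N Bf) (1 + 2%:P * tr N Wf).
Proof. by constructor=> i Hi; rewrite coefD coef1 coefCM !coef_tr Hi. Qed.

Lemma large_eq n : large_schroeder n = Bf n.
Proof.
apply: (@uniq_quad _ _ 1 0 1 1) => N.
  etr (large_rel N); apply: eqm_eq; rewrite /Phi polyC0 polyC1; ring.
etr (tr_Bf N).
have h : eqm N (1 + 2%:P * tr N Wf)
   (1 + 2%:P * ('X * (1 + 3%:P * tr N Wf + 2%:P * tr N Wf ^+ 2))).
  by apply: eqm_add; [apply: eqm_refl | apply: eqm_mull; apply: Wf_rel].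
etr h; apply: eqm_sym.
have h2 : eqm N (1%:P + 'X * Phi 0 1 1 (tr N Bf))
                (1%:P + 'X * Phi 0 1 1 (1 + 2%:P * tr N Wf)).
  by apply: eqm_add; [apply: eqm_refl | apply: eqm_mull; apply: eqm_Phi; apply: tr_Bf].
etr h2; apply: eqm_eq; rewrite /Phi polyC0 polyC1.
rewrite -[2%:P]/(polyC (1 + 1)) -[3%:P]/(polyC (1 + 1 + 1)) !polyCD polyC1.
ring.
Qed.

Lemma large_hM N : eqm N (tr N large_schroeder)
  (1 + 'X * (tr N large_schroeder * (2%:P + 2%:P * tr N Wf))).
Proof.
have hS : eqm N (tr N large_schroeder) (1 + 2%:P * tr N Wf).
  have e : eqm N (tr N large_schroeder) (tr N Bf).
    by constructor=> i Hi; rewrite !coef_tr Hi large_eq.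
  etr e; exact: tr_Bf.
etr hS; apply: eqm_sym.
etr (eqm_add (eqm_refl N 1) (eqm_mull 'X (eqm_mulr (2%:P + 2%:P * tr N Wf) hS))).
apply: eqm_sym.
etr (eqm_add (eqm_refl N 1) (eqm_mull 2%:P (Wf_rel N))).
apply: eqm_eq; ring.
Qed.

Lemma little_hM N : eqm N (tr N little_schroeder)
  (1 + 'X * (tr N little_schroeder * (1%:P + 2%:P * tr N Wf))).
Proof.
have hS : eqm N (tr N little_schroeder) (1 + tr N Wf).
  apply: eqm_sym; etr (eqm_add (eqm_refl N 1) (tr_Wf N)).
  by apply: eqm_eq; ring.
etr hS; apply: eqm_sym.
etr (eqm_add (eqm_refl N 1) (eqm_mull 'X (eqm_mulr (1%:P + 2%:P * tr N Wf) hS))).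
apply: eqm_sym.
etr (eqm_add (eqm_refl N 1) (Wf_rel N)).
apply: eqm_eq; rewrite polyC1; ring.
Qed.

Theorem mainTheorem1 :
  is_moment_sequence large_schroeder
    (riordan_poly (fps_inv (fps_of_seq [:: 1; 2]))
                  (fmul fX (fps_inv (fps_of_seq [:: 1; 3; 2])))) /\
  is_moment_sequence little_schroeder
    (riordan_poly (fps_inv (fps_of_seq [:: 1; 1]))
                  (fmul fX (fps_inv (fps_of_seq [:: 1; 3; 2])))).
Proof.
have h2 : (2 : rat) * (3 - 2) = 2 by [].
have h1 : (1 : rat) * (3 - 1) = 2 by [].
split.
  apply: (ortho_gen (b := bcoef 2) (l := lcoef)).
  - exact: rpoly0.
  - exact: rpoly_rec h2.
  - by [].
  - by [].
  - apply: (LP_delta (beta := 2) (W := Wf)).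
    + exact: rpoly0.
    + exact: rpoly_rec h2.
    + exact: large_hM.
    + exact: Wf_rel.
apply: (ortho_gen (b := bcoef 1) (l := lcoef)).
- exact: rpoly0.
- exact: rpoly_rec h1.
- by [].
- by [].
- apply: (LP_delta (beta := 1) (W := Wf)).
  + exact: rpoly0.
  + exact: rpoly_rec h1.
  + exact: little_hM.
  + exact: Wf_rel.
Qed.
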